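(* Consider the fixed-share algorithm with time-varying parameters, with $\eta_t=\sqrt{\ln(dt)/t}$ for $t\ge3$, $\eta_0=\eta_1=\eta_2=\eta_3$, and $\alpha_t=1/t$ for $t\ge1$. Then for all $T\ge3$ and all loss vectors $\ell_1,\dots,\ell_T\in[0,1]^d$, \[ \max_{1\le r\le s\le T}\Big\{\sum_{t=r}^s\hat p_t^\top\ell_t-\min_{q\in\Delta_d}\sum_{t=r}^sq^\top\ell_t\Big\}\le\sqrt{2T\ln(dT)}+\sqrt{3\ln(3d)}. \]
   Context: Let $d\ge1$ and $\Delta_d=\{q\in[0,1]^d:\sum_{i=1}^d q_i=1\}$. The fixed-share algorithm with time-varying parameters uses sequences $(\eta_t)_{t\ge1}$ of positive numbers and $(\alpha_t)_{t\ge1}$ in $(0,1]$, with the convention $\eta_0=\eta_1$. It sets $\hat p_1=(1/d,\dots,1/d)$; at each round $t\ge1$ it predicts $\hat p_t\in\Delta_d$, observes an arbitrary loss vector $\ell_t=(\ell_{1,t},\dots,\ell_{d,t})\in[0,1]^d$, suffers loss $\hat p_t^\top\ell_t$, and then sets, for $j=1,\dots,d$, $v_{j,t+1}=\hat p_{j,t}^{\,\eta_t/\eta_{t-1}}e^{-\eta_t\ell_{j,t}}\big/\sum_{i=1}^d\hat p_{i,t}^{\,\eta_t/\eta_{t-1}}e^{-\eta_t\ell_{i,t}}$ and $\hat p_{j,t+1}=\alpha_t/d+(1-\alpha_t)v_{j,t+1}$. (The maximum ranges over integers $r,s$.) *)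

(* Defs.v *)
From Stdlib Require Import Reals Lra.
Open Scope R_scope.

Fixpoint rsum (f : nat -> R) (n : nat) : R :=
  match n with
  | O => 0
  | S k => rsum f k + f k
  end.

(* sum_{t=r}^{s} g t  (integers r <= s) *)
Definition range_sum (g : nat -> R) (r s : nat) : R :=
  rsum (fun k => g (r + k)%nat) (S (s - r)).

Definition dot (d : nat) (q x : nat -> R) : R := rsum (fun j => q j * x j) d.

Definition in_simplex (d : nat) (q : nat -> R) : Prop :=
  (forall j, (j < d)%nat -> 0 <= q j <= 1) /\ rsum q d = 1.

(* One update of fixed share at round t (t >= 1), given p_t, eta_t, eta_{t-1},
   alpha_t and loss vector l_t; returns p_{t+1}. *)
Definition fs_update (d : nat) (p : nat -> R) (eta_t eta_tm1 alpha_t : R)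
  (lt : nat -> R) : nat -> R :=
  let w := fun j => Rpower (p j) (eta_t / eta_tm1) * exp (- eta_t * lt j) in
  let Z := rsum w d in
  fun j => alpha_t / INR d + (1 - alpha_t) * (w j / Z).

(* fs_weights d eta alpha l n = \hat p_{n+1}.
   eta : nat -> R gives eta_t for all t >= 0 (including the convention eta_0),
   alpha : nat -> R gives alpha_t for t >= 1, l t j = l_{j+1,t}. *)
Fixpoint fs_weights (d : nat) (eta alpha : nat -> R) (l : nat -> nat -> R)
  (n : nat) : nat -> R :=
  match n with
  | O => fun _ => 1 / INR d
  | S k => fs_update d (fs_weights d eta alpha l k)
             (eta (S k)) (eta k) (alpha (S k)) (l (S k))
  end.

Definition phat (d : nat) (eta alpha : nat -> R) (l : nat -> nat -> R)
  (t : nat) : nat -> R :=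
  fs_weights d eta alpha l (t - 1).

Definition eta_thm (d : nat) (t : nat) : R :=
  if (t <? 3)%nat then sqrt (ln (INR d * 3) / 3)
  else sqrt (ln (INR d * INR t) / INR t).

(* alpha_t = 1/t for t >= 1 (value at t = 0 is never used). *)
Definition alpha_thm (t : nat) : R := 1 / INR t.

(* Main.v *)
Require Import Defs.
From Stdlib Require Import Reals Lra Lia.
Open Scope R_scope.

Lemma rsum_ext f g n : (forall j, (j < n)%nat -> f j = g j) -> rsum f n = rsum g n.
Proof. induction n; simpl; intros H; auto. rewrite IHn by (intros; apply H; lia). rewrite H by lia. auto. Qed.

Lemma rsum_le f g n : (forall j, (j < n)%nat -> f j <= g j) -> rsum f n <= rsum g n.
Proof. induction n; simpl; intros H. lra. assert (rsum f n <= rsum g n) by (apply IHn; intros; apply H; lia).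
  assert (f n <= g n) by (apply H; lia). lra. Qed.

Lemma rsum_plus f g n : rsum (fun j => f j + g j) n = rsum f n + rsum g n.
Proof. induction n; simpl. lra. rewrite IHn. lra. Qed.

Lemma rsum_minus f g n : rsum (fun j => f j - g j) n = rsum f n - rsum g n.
Proof. induction n; simpl. lra. rewrite IHn. lra. Qed.

Lemma rsum_scal c f n : rsum (fun j => c * f j) n = c * rsum f n.
Proof. induction n; simpl. lra. rewrite IHn. lra. Qed.

Lemma rsum_const c n : rsum (fun _ => c) n = INR n * c.
Proof. induction n; simpl rsum. simpl. lra. rewrite IHn, S_INR. lra. Qed.

Lemma rsum_nonneg f n : (forall j, (j < n)%nat -> 0 <= f j) -> 0 <= rsum f n.
Proof. intros H. replace 0 with (rsum (fun _ => 0) n). apply rsum_le; auto.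
  rewrite rsum_const; lra. Qed.

Lemma rsum_pos f n : (1 <= n)%nat -> (forall j, (j < n)%nat -> 0 < f j) -> 0 < rsum f n.
Proof. intros Hn H. destruct n. lia. simpl.
  assert (0 <= rsum f n) by (apply rsum_nonneg; intros; left; apply H; lia).
  assert (0 < f n) by (apply H; lia). lra. Qed.

Lemma rsum_term f n j : (forall k, (k < n)%nat -> 0 <= f k) -> (j < n)%nat -> f j <= rsum f n.
Proof. induction n; intros H Hj. lia. simpl.
  destruct (Nat.eq_dec j n). subst. assert (0 <= rsum f n) by (apply rsum_nonneg; intros; apply H; lia). lra.
  assert (f j <= rsum f n) by (apply IHn; [intros; apply H; lia | lia]).
  assert (0 <= f n) by (apply H; lia). lra. Qed.

Lemma rsum_shift f n : rsum f (S n) = f O + rsum (fun k => f (S k)) n.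
Proof. induction n. simpl. lra. change (rsum f (S (S n))) with (rsum f (S n) + f (S n)). rewrite IHn. simpl. lra. Qed.

Lemma cvx_exp a u : 0 <= a <= 1 -> exp (a * u) <= 1 - a + a * exp u.
Proof.
  intros Ha. set (E := exp (a*u)).
  assert (H1 : 1 >= E * (1 - a*u)).
  { pose proof (exp_ineq1_le (- (a*u))). assert (exp (-(a*u)) * E = 1).
    { unfold E. rewrite <- exp_plus. replace (-(a*u) + a*u) with 0 by ring. apply exp_0. }
    assert (0 < E) by apply exp_pos. nra. }
  assert (H2 : exp u >= E * (1 + (1-a)*u)).
  { pose proof (exp_ineq1_le ((1-a)*u)). assert (exp ((1-a)*u) * E = exp u).
    { unfold E. rewrite <- exp_plus. f_equal. ring. }
    assert (0 < E) by apply exp_pos. nra. }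
  assert (H3 : (1-a) * 1 >= (1-a) * (E * (1 - a*u))) by (apply Rmult_ge_compat_l; lra).
  assert (H4 : a * exp u >= a * (E * (1 + (1-a)*u))) by (apply Rmult_ge_compat_l; lra).
  nra.
Qed.

Lemma ln_div' x y : 0 < x -> 0 < y -> ln (x / y) = ln x - ln y.
Proof. intros. unfold Rdiv. rewrite ln_mult, ln_Rinv; auto. apply Rinv_0_lt_compat; auto. Qed.

Lemma ln_le x y : 0 < x -> x <= y -> ln x <= ln y.
Proof. intros H1 [H2|H2]. left; apply ln_increasing; auto. subst; lra. Qed.

Lemma holder d (x : nat -> R) a : (1 <= d)%nat -> (forall j, (j < d)%nat -> 0 < x j) -> 0 <= a <= 1 ->
  ln (rsum (fun j => exp (a * ln (x j))) d) <= (1 - a) * ln (INR d) + a * ln (rsum x d).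
Proof.
  intros Hd Hx Ha.
  assert (HS : 0 < rsum x d) by (apply rsum_pos; auto).
  assert (Hdp : 0 < INR d) by (apply lt_0_INR; lia).
  set (c := rsum x d / INR d).
  assert (Hc : 0 < c) by (unfold c; apply Rdiv_lt_0_compat; auto).
  assert (Hb : rsum (fun j => exp (a * ln (x j))) d <= rsum (fun j => exp (a * ln c) * (1 - a + a * (x j / c))) d).
  { apply rsum_le. intros j Hj.
    replace (a * ln (x j)) with (a * ln c + a * (ln (x j) - ln c)) by ring.
    rewrite exp_plus. apply Rmult_le_compat_l. left; apply exp_pos.
    replace (x j / c) with (exp (ln (x j) - ln c)). apply cvx_exp; auto.
    rewrite <- ln_div' by auto. apply exp_ln. apply Rdiv_lt_0_compat; auto. }
  rewrite rsum_scal, rsum_plus, rsum_const, rsum_scal in Hb.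
  replace (rsum (fun j => x j / c) d) with (rsum x d / c) in Hb.
  2:{ unfold Rdiv. rewrite Rmult_comm. rewrite <- rsum_scal. apply rsum_ext. intros; ring. }
  replace (INR d * (1 - a) + a * (rsum x d / c)) with (INR d) in Hb by (unfold c; field; lra).
  assert (HZ : 0 < rsum (fun j => exp (a * ln (x j))) d) by (apply rsum_pos; auto; intros; apply exp_pos).
  apply ln_le in Hb; auto.
  rewrite ln_mult, ln_exp in Hb; auto. 2: apply exp_pos.
  unfold c in Hb. rewrite ln_div' in Hb; auto. lra.
Qed.

Lemma hoeff_fin d (p l : nat -> R) e : (forall j, (j < d)%nat -> 0 <= p j) -> rsum p d = 1 ->
  (forall j, (j < d)%nat -> 0 <= l j <= 1) -> 0 < e ->
  (forall m h : R, 0 <= m <= 1 -> 0 <= h -> ln (1 - m + m * exp (- h)) <= - h * m + h * h / 8) ->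
  0 < rsum (fun j => p j * exp (- e * l j)) d ->
  dot d p l <= - (1 / e) * ln (rsum (fun j => p j * exp (- e * l j)) d) + e / 8.
Proof.
  intros Hp Hs Hl He Hb HS.
  set (m := dot d p l).
  assert (Hm : 0 <= m <= 1).
  { unfold m, dot. split. apply rsum_nonneg. intros j Hj. pose proof (Hl j Hj); pose proof (Hp j Hj). nra.
    rewrite <- Hs. apply rsum_le. intros j Hj. pose proof (Hl j Hj); pose proof (Hp j Hj). nra. }
  assert (H1 : rsum (fun j => p j * exp (- e * l j)) d <= 1 - m + m * exp (- e)).
  { apply Rle_trans with (rsum (fun j => p j * (1 - l j + l j * exp (-e))) d).
    apply rsum_le. intros j Hj. apply Rmult_le_compat_l. auto.
    replace (- e * l j) with (l j * (- e)) by ring. apply cvx_exp. apply Hl; auto.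
    right. unfold m, dot. replace (1 - rsum (fun j => p j * l j) d + rsum (fun j => p j * l j) d * exp (- e))
      with (rsum p d - rsum (fun j => p j * l j) d + exp (-e) * rsum (fun j => p j * l j) d) by (rewrite Hs; ring).
    rewrite <- rsum_scal, <- rsum_minus, <- rsum_plus. apply rsum_ext. intros; ring. }
  apply ln_le in H1; auto.
  pose proof (Hb m e Hm (Rlt_le _ _ He)).
  assert (ln (rsum (fun j => p j * exp (- e * l j)) d) <= - e * m + e * e / 8) by lra.
  replace (- (1 / e) * ln (rsum (fun j => p j * exp (- e * l j)) d) + e / 8)
    with ((- ln (rsum (fun j => p j * exp (- e * l j)) d) + e * e / 8)/ e) by (field; lra).
  apply Rmult_le_reg_r with e; auto. unfold Rdiv. rewrite Rmult_assoc, Rinv_l by lra. lra.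
Qed.
From Coquelicot Require Import Coquelicot.

Lemma Dpos (m x : R) : 0 <= m <= 1 -> 0 <= x -> 0 < 1 - m + m * exp (- x).
Proof.
  intros Hm Hx.
  assert (exp (-x) <= 1).
  { rewrite <- exp_0. destruct (Req_dec x 0). subst. rewrite Ropp_0. lra.
    left. apply exp_increasing. lra. }
  assert (0 < exp (-x)) by apply exp_pos. nra.
Qed.

Lemma hoeff_bern (m h : R) : 0 <= m <= 1 -> 0 <= h ->
  ln (1 - m + m * exp (- h)) <= - h * m + h * h / 8.
Proof.
  intros Hm Hh.
  set (b := fun x => m * exp (- x) / (1 - m + m * exp (- x))).
  set (G1 := fun x => m - b x).
  assert (HG1d : forall x, 0 <= x -> derivable_pt_lim G1 x (b x * (1 - b x))).
  { intros x Hx. apply is_derive_Reals. unfold G1, b.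
    pose proof (Dpos m x Hm Hx).
    auto_derive. lra. field. lra. }
  assert (HG1 : forall c, 0 <= c -> G1 c <= c / 4).
  { intros c Hc. destruct (Req_dec c 0).
    - subst. unfold G1, b. rewrite Ropp_0, exp_0.
      replace (1 - m + m*1) with 1 by ring. lra.
    - destruct (MVT_cor3 G1 (fun x => b x * (1 - b x)) 0 c) as [xi [H1 [H2 H3]]].
      lra. intros x Hx _. apply HG1d; lra.
      rewrite H3. unfold G1 at 1, b at 1. rewrite Ropp_0, exp_0.
      replace (m - m * 1 / (1 - m + m * 1)) with 0 by (field; lra).
      assert (b xi * (1 - b xi) <= 1/4) by (pose proof (pow2_ge_0 (b xi - 1/2)); nra).
      assert ((b xi * (1 - b xi)) * (c - 0) <= 1/4 * (c-0)) by (apply Rmult_le_compat_r; lra). lra. }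
  set (F := fun x => x * x / 8 - (ln (1 - m + m * exp (- x)) + m * x)).
  assert (HFd : forall x, 0 <= x -> derivable_pt_lim F x (x / 4 - G1 x)).
  { intros x Hx. apply is_derive_Reals. unfold F, G1, b.
    pose proof (Dpos m x Hm Hx).
    auto_derive. lra. field. lra. }
  destruct (Req_dec h 0).
  - subst. rewrite Ropp_0, exp_0. replace (1 - m + m*1) with 1 by ring. rewrite ln_1. lra.
  - destruct (MVT_cor3 F (fun x => x / 4 - G1 x) 0 h) as [xi [H1 [H2 H3]]].
    lra. intros x Hx _. apply HFd; lra.
    assert (HF0 : F 0 = 0). { unfold F. rewrite Ropp_0, exp_0. replace (1 - m + m*1) with 1 by ring. rewrite ln_1. lra. }
    assert (HGx : G1 xi <= xi/4) by (apply HG1; lra).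
    assert (HFh : 0 <= F h). { rewrite H3, HF0. apply Rplus_le_le_0_compat. lra. apply Rmult_le_pos; lra. }
    unfold F in HFh. lra.
Qed.

Definition Qf d (q p : nat -> R) := rsum (fun j => q j * ln (p j)) d.

Definition vv d (p : nat -> R) e e' (l : nat -> R) : nat -> R :=
  fun j => (Rpower (p j) (e/e') * exp (-e * l j)) / rsum (fun i => Rpower (p i) (e/e') * exp (- e * l i)) d.

Lemma step d p q l e e' : (1 <= d)%nat -> (forall j, (j < d)%nat -> 0 < p j) -> rsum p d = 1 ->
  (forall j, (j < d)%nat -> 0 <= l j <= 1) -> (forall j, (j < d)%nat -> 0 <= q j) -> rsum q d = 1 ->
  0 < e -> e <= e' ->
  dot d p l - dot d q l <= e' / 8 + (1/e - 1/e') * ln (INR d) + (1/e) * Qf d q (vv d p e e' l) - (1/e') * Qf d q p.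
Proof.
  intros Hd Hp Hps Hl Hq Hqs He Hee.
  set (a := e / e').
  assert (Ha : 0 < a <= 1). { unfold a. split. apply Rdiv_lt_0_compat; lra.
    apply Rmult_le_reg_r with e'. lra. unfold Rdiv. rewrite Rmult_assoc, Rinv_l by lra. lra. }
  set (x := fun j => p j * exp (- e' * l j)).
  assert (Hx : forall j, (j < d)%nat -> 0 < x j). { intros. unfold x. apply Rmult_lt_0_compat. auto. apply exp_pos. }
  set (w := fun j => Rpower (p j) (e/e') * exp (-e * l j)).
  assert (Hw : forall j, (j < d)%nat -> w j = exp (a * ln (x j))).
  { intros j Hj. unfold w, x, Rpower. rewrite <- exp_plus. f_equal. rewrite ln_mult, ln_exp; auto. 2: apply exp_pos.
    unfold a. field. lra. }
  set (Z := rsum w d).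
  assert (HZ : 0 < Z). { apply rsum_pos; auto. intros; unfold w. apply Rmult_lt_0_compat. unfold Rpower; apply exp_pos. apply exp_pos. }
  assert (HSx : 0 < rsum x d) by (apply rsum_pos; auto).
  assert (H1 : dot d p l <= - (1 / e') * ln (rsum x d) + e' / 8).
  { apply hoeff_fin; auto. intros; left; auto. lra. intros; apply hoeff_bern; auto. }
  assert (H2 : ln Z <= (1 - a) * ln (INR d) + a * ln (rsum x d)).
  { replace Z with (rsum (fun j => exp (a * ln (x j))) d). apply holder; auto. lra.
    unfold Z. apply rsum_ext. intros; symmetry; auto. }
  assert (H3 : Qf d q (vv d p e e' l) = a * Qf d q p - e * dot d q l - ln Z).
  { unfold Qf, vv, dot. fold w. fold Z.
    replace (a * rsum (fun j => q j * ln (p j)) d - e * rsum (fun j => q j * l j) d - ln Z)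
      with (rsum (fun j => q j * (a * ln (p j) - e * l j - ln Z)) d).
    apply rsum_ext. intros j Hj. f_equal. rewrite ln_div'; auto.
    unfold w, Rpower. rewrite <- exp_plus, ln_exp. fold a. ring.
    unfold w. apply Rmult_lt_0_compat. unfold Rpower; apply exp_pos. apply exp_pos.
    rewrite (rsum_ext _ (fun j => a * (q j * ln (p j)) - e * (q j * l j) - ln Z * q j)) by (intros; ring).
    rewrite !rsum_minus, !rsum_scal, Hqs. ring. }
  rewrite H3.
  assert (a / e = 1 / e') by (unfold a; field; lra).
  assert (E1 : (1/e) * ln Z <= (1/e - 1/e') * ln (INR d) + (1/e') * ln (rsum x d)).
  { apply Rmult_le_compat_l with (r := 1/e) in H2. 2: left; apply Rdiv_lt_0_compat; lra.
    replace ((1/e - 1/e') * ln (INR d) + (1/e') * ln (rsum x d)) with (1 / e * ((1 - a) * ln (INR d) + a * ln (rsum x d))).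
    auto. unfold a; field; lra. }
  assert (E2 : (1 / e) * (a * Qf d q p - e * dot d q l - ln Z) = (a/e) * Qf d q p - dot d q l - (1/e) * ln Z).
  { field. lra. }
  rewrite E2, H. lra.
Qed.

Lemma phat_succ d eta alpha l t : (1 <= t)%nat ->
  phat d eta alpha l (S t) = fs_update d (phat d eta alpha l t) (eta t) (eta (t-1)%nat) (alpha t) (l t).
Proof. intros Ht. destruct t. lia. unfold phat. replace (S (S t) - 1)%nat with (S t) by lia.
  replace (S t - 1)%nat with t by lia. simpl. reflexivity. Qed.

Lemma fs_update_vv d p e e' a lt j : fs_update d p e e' a lt j = a / INR d + (1 - a) * vv d p e e' lt j.
Proof. reflexivity. Qed.

Lemma vv_props d p e e' lt : (1 <= d)%nat ->
  (forall j, (j < d)%nat -> 0 < vv d p e e' lt j <= 1) /\ rsum (vv d p e e' lt) d = 1.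
Proof.
  intros Hd. set (w := fun i => Rpower (p i) (e/e') * exp (- e * lt i)).
  assert (Hw : forall j, 0 < w j). { intros; unfold w, Rpower. apply Rmult_lt_0_compat; apply exp_pos. }
  assert (HZ : 0 < rsum w d) by (apply rsum_pos; auto).
  split.
  - intros j Hj. change (0 < w j / rsum w d <= 1). split. apply Rdiv_lt_0_compat; [apply (Hw j)|auto].
    apply Rmult_le_reg_r with (rsum w d); auto. unfold Rdiv. rewrite Rmult_assoc, Rinv_l by lra.
    rewrite Rmult_1_r, Rmult_1_l. apply rsum_term; auto. intros; left; auto.
  - change (rsum (fun j => w j / rsum w d) d = 1). unfold Rdiv. rewrite (rsum_ext _ (fun j => / rsum w d * w j)) by (intros; ring).
    rewrite rsum_scal. field. lra.
Qed.

Lemma upd_props d p e e' a lt : (1 <= d)%nat -> 0 < a <= 1 ->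
  (forall j, (j < d)%nat -> 0 < fs_update d p e e' a lt j) /\ rsum (fs_update d p e e' a lt) d = 1.
Proof.
  intros Hd Ha. destruct (vv_props d p e e' lt Hd) as [H1 H2].
  assert (Hdp : 0 < INR d) by (apply lt_0_INR; lia).
  split.
  - intros j Hj. rewrite fs_update_vv. destruct (H1 j Hj).
    assert (0 < a / INR d) by (apply Rdiv_lt_0_compat; lra).
    assert (0 <= (1 - a) * vv d p e e' lt j) by (apply Rmult_le_pos; lra). lra.
  - rewrite (rsum_ext _ (fun j => a / INR d + (1 - a) * vv d p e e' lt j)) by (intros; apply fs_update_vv).
    rewrite rsum_plus, rsum_const, rsum_scal, H2. field. lra.
Qed.

Lemma alpha_ok t : (1 <= t)%nat -> 0 < alpha_thm t <= 1.
Proof. intros. unfold alpha_thm. assert (1 <= INR t) by (replace 1 with (INR 1) by reflexivity; apply le_INR; auto).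
  split. apply Rdiv_lt_0_compat; lra. apply Rmult_le_reg_r with (INR t). lra. unfold Rdiv.
  rewrite Rmult_assoc, Rinv_l by lra. lra. Qed.

Lemma weights_props d eta l k : (1 <= d)%nat ->
  (forall j, (j < d)%nat -> 0 < fs_weights d eta alpha_thm l k j) /\ rsum (fs_weights d eta alpha_thm l k) d = 1.
Proof.
  intros Hd. assert (Hdp : 0 < INR d) by (apply lt_0_INR; lia).
  destruct k; simpl.
  - split. intros; apply Rdiv_lt_0_compat; lra. rewrite rsum_const. field. lra.
  - apply upd_props; auto. apply alpha_ok. lia.
Qed.

Lemma phat_props d eta l t : (1 <= d)%nat ->
  (forall j, (j < d)%nat -> 0 < phat d eta alpha_thm l t j) /\ rsum (phat d eta alpha_thm l t) d = 1.
Proof. intros; apply weights_props; auto. Qed.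

Lemma Qf_le0 d q v : (forall j, (j < d)%nat -> 0 <= q j) -> (forall j, (j < d)%nat -> 0 < v j <= 1) -> Qf d q v <= 0.
Proof. intros Hq Hv. unfold Qf. replace 0 with (rsum (fun _ => 0) d) by (rewrite rsum_const; ring).
  apply rsum_le. intros j Hj. destruct (Hv j Hj). assert (ln (v j) <= 0). { rewrite <- ln_1. apply ln_le; auto. }
  pose proof (Hq j Hj). nra. Qed.

Lemma Qf_lower d q p c : (forall j, (j < d)%nat -> 0 <= q j) -> rsum q d = 1 -> 0 < c ->
  (forall j, (j < d)%nat -> c <= p j) -> ln c <= Qf d q p.
Proof. intros Hq Hqs Hc Hp. unfold Qf. replace (ln c) with (rsum (fun j => q j * ln c) d).
  apply rsum_le. intros j Hj. apply Rmult_le_compat_l; auto. apply ln_le; auto.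
  rewrite (rsum_ext _ (fun j => ln c * q j)) by (intros; ring). rewrite rsum_scal, Hqs. ring. Qed.

Lemma Qf_mono d q v p k : (forall j, (j < d)%nat -> 0 <= q j) -> rsum q d = 1 -> 0 < k ->
  (forall j, (j < d)%nat -> 0 < v j /\ k * v j <= p j) -> Qf d q v <= Qf d q p - ln k.
Proof. intros Hq Hqs Hk Hp. unfold Qf.
  replace (rsum (fun j => q j * ln (p j)) d - ln k) with (rsum (fun j => q j * (ln (p j) - ln k)) d).
  apply rsum_le. intros j Hj. apply Rmult_le_compat_l; auto. destruct (Hp j Hj).
  assert (ln (k * v j) <= ln (p j)) by (apply ln_le; auto; apply Rmult_lt_0_compat; auto).
  rewrite ln_mult in H1; auto. lra.
  rewrite (rsum_ext _ (fun j => q j * ln (p j) - ln k * q j)) by (intros; ring). rewrite rsum_minus, rsum_scal, Hqs. ring. Qed.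

Lemma Qf_unif d q : rsum q d = 1 -> (1 <= d)%nat -> Qf d q (fun _ => 1 / INR d) = - ln (INR d).
Proof. intros Hqs Hd. unfold Qf. rewrite (rsum_ext _ (fun j => ln (1 / INR d) * q j)) by (intros; ring).
  rewrite rsum_scal, Hqs. unfold Rdiv. rewrite Rmult_1_l, ln_Rinv. ring. apply lt_0_INR; lia. Qed.

Lemma INR3 : INR 3 = 3. Proof. simpl. ring. Qed.

Lemma eta_small d t : (t <= 3)%nat -> eta_thm d t = sqrt (ln (INR d * 3) / 3).
Proof. intros Ht. unfold eta_thm. destruct (Nat.ltb_spec t 3). auto.
  replace t with 3%nat by lia. rewrite INR3. auto. Qed.

Lemma eta_big d t : (3 <= t)%nat -> eta_thm d t = sqrt (ln (INR d * INR t) / INR t).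
Proof. intros Ht. unfold eta_thm. destruct (Nat.ltb_spec t 3). lia. auto. Qed.

Lemma ln_ge1 x : 3 <= x -> 1 <= ln x.
Proof. intros. rewrite <- (ln_exp 1). apply ln_le. apply exp_pos. pose proof exp_le_3. lra. Qed.

Lemma ln_1p y : 0 <= y -> ln (1 + y) <= y.
Proof. intros. rewrite <- (ln_exp y) at 2. apply ln_le. lra. apply exp_ineq1_le. Qed.

Lemma INR_ge1 d : (1 <= d)%nat -> 1 <= INR d.
Proof. intros. replace 1 with (INR 1) by reflexivity. apply le_INR; auto. Qed.

Lemma INR_ge3 d : (3 <= d)%nat -> 3 <= INR d.
Proof. intros. rewrite <- INR3. apply le_INR; auto. Qed.

Lemma ratio_dec D x : 1 <= D -> 3 <= x -> ln (D * (x + 1)) / (x + 1) <= ln (D * x) / x.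
Proof.
  intros HD Hx.
  assert (E : ln (D * (x+1)) = ln (D * x) + ln (1 + 1/x)).
  { rewrite <- ln_mult. f_equal. field. lra. nra. assert (0 < 1/x) by (apply Rdiv_lt_0_compat; lra). lra. }
  assert (H1 : ln (1 + 1/x) <= 1/x) by (apply ln_1p; left; apply Rdiv_lt_0_compat; lra).
  assert (H2 : 1 <= ln (D * x)) by (apply ln_ge1; nra).
  apply Rmult_le_reg_r with (x * (x+1)). nra.
  replace (ln (D * (x + 1)) / (x + 1) * (x * (x + 1))) with (x * ln (D * (x+1))) by (field; lra).
  replace (ln (D * x) / x * (x * (x + 1))) with ((x+1) * ln (D * x)) by (field; lra).
  rewrite E. assert (x * ln (1 + 1/x) <= x * (1/x)) by (apply Rmult_le_compat_l; lra).
  replace (x * (1/x)) with 1 in H by (field; lra). nra.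
Qed.

Lemma eta_dec d t : (1 <= d)%nat -> eta_thm d (S t) <= eta_thm d t.
Proof.
  intros Hd. destruct (Nat.le_gt_cases (S t) 3).
  - rewrite !eta_small by lia. lra.
  - rewrite !eta_big by lia. apply sqrt_le_1_alt. rewrite S_INR. apply ratio_dec. apply INR_ge1; auto.
    apply INR_ge3; lia.
Qed.

Lemma eta_anti d j k : (1 <= d)%nat -> (j <= k)%nat -> eta_thm d k <= eta_thm d j.
Proof. intros Hd Hjk. induction Hjk. lra. pose proof (eta_dec d m Hd). lra. Qed.

Lemma eta_pos d t : (1 <= d)%nat -> 0 < eta_thm d t.
Proof.
  intros Hd. pose proof (INR_ge1 d Hd). destruct (Nat.le_gt_cases t 3).
  - rewrite eta_small by auto. apply sqrt_lt_R0. apply Rdiv_lt_0_compat; try lra.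
    rewrite <- ln_1. apply ln_increasing; lra.
  - rewrite eta_big by lia. apply sqrt_lt_R0. pose proof (INR_ge3 t ltac:(lia)). apply Rdiv_lt_0_compat; try lra.
    rewrite <- ln_1. apply ln_increasing; nra.
Qed.

Lemma eta_le_u d T u : (1 <= d)%nat -> (3 <= T)%nat -> (1 <= u)%nat -> (u <= T)%nat ->
  eta_thm d u <= sqrt (ln (INR d * INR T) / INR u).
Proof.
  intros Hd HT Hu1 HuT. pose proof (INR_ge1 d Hd). pose proof (INR_ge3 T HT).
  pose proof (INR_ge1 u Hu1). assert (INR u <= INR T) by (apply le_INR; auto).
  assert (HL : 1 <= ln (INR d * INR T)) by (apply ln_ge1; nra).
  destruct (Nat.le_gt_cases u 3).
  - rewrite eta_small by auto. apply sqrt_le_1_alt.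
    assert (INR u <= 3) by (rewrite <- INR3; apply le_INR; auto).
    assert (ln (INR d * 3) <= ln (INR d * INR T)) by (apply ln_le; nra).
    apply Rle_trans with (ln (INR d * INR T) / 3).
    unfold Rdiv; apply Rmult_le_compat_r; lra.
    unfold Rdiv; apply Rmult_le_compat_l. lra. apply Rinv_le_contravar; lra.
  - rewrite eta_big by lia. apply sqrt_le_1_alt. unfold Rdiv. apply Rmult_le_compat_r.
    left; apply Rinv_0_lt_compat; lra. apply ln_le; nra.
Qed.

Lemma eta0_le d T : (1 <= d)%nat -> (3 <= T)%nat -> eta_thm d 0 <= sqrt (ln (INR d * INR T)).
Proof.
  intros Hd HT. pose proof (INR_ge1 d Hd). pose proof (INR_ge3 T HT).
  rewrite eta_small by lia. apply sqrt_le_1_alt.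
  assert (ln (INR d * 3) <= ln (INR d * INR T)) by (apply ln_le; nra).
  assert (0 <= ln (INR d * 3)) by (rewrite <- ln_1; apply ln_le; nra). lra.
Qed.

Lemma sqrt_step u : (1 <= u)%nat -> 1 / sqrt (INR u) <= 2 * (sqrt (INR u) - sqrt (INR (u - 1))).
Proof.
  intros Hu. set (a := sqrt (INR u)). set (b := sqrt (INR (u-1))).
  assert (Ha2 : a * a = INR u) by (apply sqrt_sqrt; apply pos_INR).
  assert (Hb2 : b * b = INR u - 1) by (unfold b; rewrite sqrt_sqrt by apply pos_INR; rewrite minus_INR by lia; simpl; ring).
  assert (Ha : 0 < a) by (apply sqrt_lt_R0; pose proof (INR_ge1 u Hu); lra).
  assert (Hb : 0 <= b) by apply sqrt_pos.
  assert (b <= a) by (unfold a, b; apply sqrt_le_1_alt; apply le_INR; lia).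
  apply Rmult_le_reg_r with a; auto. unfold Rdiv. rewrite Rmult_assoc, Rinv_l by lra. nra.
Qed.

Lemma range_sum_base g r : range_sum g r r = g r.
Proof. unfold range_sum. rewrite Nat.sub_diag. simpl. rewrite Nat.add_0_r. ring. Qed.

Lemma range_sum_succ g r s : (r <= s)%nat -> range_sum g r (S s) = range_sum g r s + g (S s).
Proof. intros H. unfold range_sum. replace (S s - r)%nat with (S (s - r)) by lia.
  change (rsum (fun k => g (r + k)%nat) (S (S (s - r)))) with (rsum (fun k => g (r + k)%nat) (S (s - r)) + g (r + S (s - r))%nat).
  f_equal. f_equal. lia. Qed.

Lemma range_sum_first g s : (2 <= s)%nat -> range_sum g 1 s = g 1%nat + range_sum g 2 s.
Proof. intros H. unfold range_sum. replace (S (s - 1)) with (S (S (s - 2))) by lia.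
  rewrite rsum_shift. simpl. f_equal. Qed.

Lemma range_sum_minus f g r s : range_sum f r s - range_sum g r s = range_sum (fun t => f t - g t) r s.
Proof. unfold range_sum. rewrite rsum_minus. auto. Qed.

Lemma range_sum_le f g r s : (r <= s)%nat -> (forall t, (r <= t <= s)%nat -> f t <= g t) -> range_sum f r s <= range_sum g r s.
Proof. intros Hrs H. unfold range_sum. apply rsum_le. intros j Hj. apply H. lia. Qed.

Lemma telescope (g a Dn W U G : nat -> R) r T :
  (2 <= r)%nat ->
  (forall t, (r <= t <= T)%nat -> g t <= a t + Dn t - Dn (t-1)%nat + W t - U t) ->
  (forall t, (r <= t)%nat -> (t < T)%nat -> - U (S t) <= - W t + G t - G (t-1)%nat) ->
  forall s, (r <= s)%nat -> (s <= T)%nat ->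
  range_sum g r s <= range_sum a r s + Dn s - Dn (r-1)%nat + W s - U r + G (s-1)%nat - G (r-1)%nat.
Proof.
  intros Hr Hstep Hlink s Hrs HsT. induction Hrs.
  - rewrite !range_sum_base. pose proof (Hstep r ltac:(lia)). lra.
  - rewrite !range_sum_succ by lia. pose proof (IHHrs ltac:(lia)).
    pose proof (Hstep (S m) ltac:(lia)). pose proof (Hlink m ltac:(lia) ltac:(lia)).
    replace (S m - 1)%nat with m in * by lia. lra.
Qed.

Lemma eta_sum d T r s : (1 <= d)%nat -> (3 <= T)%nat -> (2 <= r)%nat -> (r <= s)%nat -> (s <= T)%nat ->
  range_sum (fun t => eta_thm d (t-1)%nat) r s <= 2 * sqrt (ln (INR d * INR T)) * (sqrt (INR (s-1)) - sqrt (INR (r-2))).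
Proof.
  intros Hd HT Hr Hrs HsT.
  set (L := ln (INR d * INR T)).
  assert (HL : 0 <= L). { unfold L. rewrite <- ln_1. apply ln_le. lra. pose proof (INR_ge1 d Hd). pose proof (INR_ge3 T HT). nra. }
  assert (Hb : forall u, (1 <= u)%nat -> (u <= T)%nat -> eta_thm d u <= 2 * sqrt L * (sqrt (INR u) - sqrt (INR (u-1)))).
  { intros u Hu1 HuT. apply Rle_trans with (sqrt (L / INR u)). unfold L; apply eta_le_u; auto.
    pose proof (INR_ge1 u Hu1). rewrite sqrt_div_alt by lra. pose proof (sqrt_step u Hu1).
    pose proof (sqrt_pos L).
    replace (sqrt L / sqrt (INR u)) with (sqrt L * (1 / sqrt (INR u))) by (unfold Rdiv; ring).
    replace (2 * sqrt L * (sqrt (INR u) - sqrt (INR (u - 1)))) with (sqrt L * (2 * (sqrt (INR u) - sqrt (INR (u - 1))))) by ring.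
    apply Rmult_le_compat_l; auto. }
  induction Hrs.
  - rewrite range_sum_base. replace (r-2)%nat with (r-1-1)%nat by lia. apply Hb; lia.
  - rewrite range_sum_succ by lia. pose proof (IHHrs ltac:(lia)). pose proof (Hb m ltac:(lia) ltac:(lia)).
    replace (S m - 1)%nat with m by lia. nra.
Qed.

Section Main.
Variables (d T : nat) (l : nat -> nat -> R) (q : nat -> R).
Hypothesis Hd : (1 <= d)%nat.
Hypothesis HT : (3 <= T)%nat.
Hypothesis Hl : forall t j, (1 <= t <= T)%nat -> (j < d)%nat -> 0 <= l t j <= 1.
Hypothesis Hq : in_simplex d q.

Let e t := eta_thm d t.
Let P t := phat d (eta_thm d) alpha_thm l t.
Let V t := vv d (P t) (e t) (e (t-1)%nat) (l t).
Let g t := dot d (P t) (l t) - dot d q (l t).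
Let LD := ln (INR d).
Let Dn t := LD / e t.
Let W t := (1 / e t) * Qf d q (V t).
Let U t := (1 / e (t-1)%nat) * Qf d q (P t).
Let G u := ln (INR u) / e u.
Let a t := 1/8 * e (t-1)%nat.

Lemma q_nonneg : forall j, (j < d)%nat -> 0 <= q j.
Proof. intros j Hj. destruct Hq as [H1 _]. apply H1; auto. Qed.
Lemma q_sum : rsum q d = 1.
Proof. destruct Hq; auto. Qed.

Lemma e_pos t : 0 < e t. Proof. apply eta_pos; auto. Qed.

Lemma per_step t : (1 <= t <= T)%nat -> g t <= a t + Dn t - Dn (t-1)%nat + W t - U t.
Proof.
  intros Ht. destruct (phat_props d (eta_thm d) l t Hd) as [Hp Hps].
  pose proof (step d (P t) q (l t) (e t) (e (t-1)%nat) Hd Hp Hps (fun j Hj => Hl t j Ht Hj) q_nonneg q_sum (e_pos t)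
    (eta_anti d (t-1) t Hd ltac:(lia))).
  unfold g, a, Dn, W, U, V. pose proof (e_pos t). pose proof (e_pos (t-1)).
  replace ((1 / e t - 1 / e (t - 1)%nat) * ln (INR d)) with (LD / e t - LD / e (t-1)%nat) in H by (unfold LD; field; lra).
  lra.
Qed.

Lemma W_le0 t : W t <= 0.
Proof. unfold W. pose proof (e_pos t). assert (Qf d q (V t) <= 0).
  { apply Qf_le0. apply q_nonneg. apply vv_props; auto. }
  assert (0 < 1 / e t) by (apply Rdiv_lt_0_compat; lra). nra. Qed.

Lemma P_succ t j : (1 <= t)%nat -> P (S t) j = alpha_thm t / INR d + (1 - alpha_thm t) * V t j.
Proof. intros Ht. unfold P. rewrite phat_succ by auto. rewrite fs_update_vv. reflexivity. Qed.

Lemma link t : (2 <= t)%nat -> - U (S t) <= - W t + G t - G (t-1)%nat.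
Proof.
  intros Ht. pose proof (INR_ge1 t ltac:(lia)) as Ht1.
  assert (HtR : 2 <= INR t) by (replace 2 with (INR 2) by (simpl; ring); apply le_INR; auto).
  assert (Hk : 0 < 1 - alpha_thm t). { unfold alpha_thm. apply Rlt_Rminus. apply Rmult_lt_reg_r with (INR t). lra.
    unfold Rdiv. rewrite Rmult_assoc, Rinv_l by lra. lra. }
  assert (HQ : Qf d q (V t) <= Qf d q (P (S t)) - ln (1 - alpha_thm t)).
  { apply Qf_mono; auto. apply q_nonneg. apply q_sum. intros j Hj. destruct (vv_props d (P t) (e t) (e (t-1)%nat) (l t) Hd) as [Hv _].
    destruct (Hv j Hj). split. auto. rewrite P_succ by lia. fold (V t).
    assert (0 < alpha_thm t / INR d). { apply Rdiv_lt_0_compat. apply alpha_ok; lia. apply lt_0_INR; lia. }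
    unfold V in *. lra. }
  assert (Hln : - ln (1 - alpha_thm t) = ln (INR t) - ln (INR (t-1))).
  { rewrite minus_INR by lia. simpl INR at 3. unfold alpha_thm.
    replace (1 - 1 / INR t) with ((INR t - 1) / INR t) by (field; lra). rewrite ln_div' by lra. ring. }
  unfold U, W, G. replace (S t - 1)%nat with t by lia.
  pose proof (e_pos t). pose proof (e_pos (t-1)). pose proof (eta_anti d (t-1) t Hd ltac:(lia)). fold (e t) (e (t-1)%nat) in H1.
  assert (H0l : 0 <= ln (INR (t-1))). { rewrite <- ln_1. apply ln_le. lra. apply INR_ge1. lia. }
  assert (ln (INR (t-1)) / e (t-1)%nat <= ln (INR (t-1)) / e t).
  { unfold Rdiv. apply Rmult_le_compat_l; auto. apply Rinv_le_contravar; auto. }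
  assert ((1 / e t) * Qf d q (V t) - (1 / e t) * Qf d q (P (S t)) <= (ln (INR t) - ln (INR (t-1))) / e t).
  { rewrite <- Hln. replace ((1 / e t) * Qf d q (V t) - (1 / e t) * Qf d q (P (S t))) with ((Qf d q (V t) - Qf d q (P (S t))) / e t) by (field; lra).
    unfold Rdiv. apply Rmult_le_compat_r. left; apply Rinv_0_lt_compat; auto. lra. }
  replace ((ln (INR t) - ln (INR (t-1))) / e t) with (ln (INR t) / e t - ln (INR (t-1)) / e t) in H3 by (field; lra).
  lra.
Qed.

Lemma U_low r : (2 <= r)%nat -> - U r <= Dn (r-1)%nat + G (r-1)%nat.
Proof.
  intros Hr. pose proof (INR_ge1 d Hd). pose proof (INR_ge1 (r-1) ltac:(lia)).
  set (c := alpha_thm (r-1) / INR d).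
  assert (Hc : 0 < c) by (unfold c, alpha_thm; apply Rdiv_lt_0_compat; [apply Rdiv_lt_0_compat|]; lra).
  assert (HQ : ln c <= Qf d q (P r)).
  { apply Qf_lower; auto. apply q_nonneg. apply q_sum. intros j Hj.
    replace r with (S (r-1)) by lia. rewrite P_succ by lia.
    destruct (vv_props d (P (r-1)) (e (r-1)%nat) (e (r-1-1)%nat) (l (r-1)%nat) Hd) as [Hv _]. destruct (Hv j Hj).
    assert (0 <= 1 - alpha_thm (r-1)) by (pose proof (alpha_ok (r-1) ltac:(lia)); lra).
    unfold V. fold c. nra. }
  assert (Hlc : ln c = - (ln (INR (r-1)) + LD)).
  { unfold c, alpha_thm, LD. rewrite ln_div' by (try apply Rdiv_lt_0_compat; lra). rewrite ln_div' by lra. rewrite ln_1. ring. }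
  unfold U, Dn, G. pose proof (e_pos (r-1)).
  assert (- (1 / e (r - 1)%nat * Qf d q (P r)) <= - (1 / e (r-1)%nat) * ln c).
  { assert (0 < 1 / e (r-1)%nat) by (apply Rdiv_lt_0_compat; lra). nra. }
  rewrite Hlc in H2. replace (LD / e (r - 1)%nat + ln (INR (r - 1)) / e (r - 1)%nat) with (- (1 / e (r - 1)%nat) * - (ln (INR (r - 1)) + LD)) by (field; lra).
  auto.
Qed.


Let L := ln (INR d * INR T).
Lemma L_pos : 0 < L.
Proof. unfold L. pose proof (INR_ge1 d Hd). pose proof (INR_ge3 T HT). rewrite <- ln_1. apply ln_increasing; nra. Qed.

Lemma DG_T : Dn T + G T = sqrt L * sqrt (INR T).
Proof.
  pose proof (INR_ge1 d Hd). pose proof (INR_ge3 T HT). pose proof L_pos.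
  unfold Dn, G, LD, e. rewrite eta_big by auto.
  assert (HL : ln (INR d) + ln (INR T) = L) by (unfold L; rewrite ln_mult; lra).
  fold L. rewrite sqrt_div_alt by lra.
  assert (0 < sqrt L) by (apply sqrt_lt_R0; lra). assert (0 < sqrt (INR T)) by (apply sqrt_lt_R0; lra).
  assert (sqrt L * sqrt L = L) by (apply sqrt_sqrt; lra).
  replace (ln (INR d) / (sqrt L / sqrt (INR T)) + ln (INR T) / (sqrt L / sqrt (INR T)))
    with ((ln (INR d) + ln (INR T)) * sqrt (INR T) / sqrt L) by (field; lra).
  rewrite HL. rewrite <- H4 at 1. field. lra.
Qed.

Lemma core r s : (2 <= r)%nat -> (r <= s)%nat -> (s <= T)%nat ->
  range_sum g r s <= 1/4 * sqrt L * sqrt (INR T) + sqrt L * sqrt (INR T).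
Proof.
  intros Hr Hrs HsT.
  pose proof (telescope g a Dn W U G r T Hr (fun t Ht => per_step t ltac:(lia)) (fun t Ht _ => link t ltac:(lia)) s Hrs HsT) as H.
  pose proof (W_le0 s). pose proof (U_low r Hr).
  assert (HDn : Dn s <= Dn T).
  { unfold Dn. assert (0 <= LD) by (unfold LD; rewrite <- ln_1; apply ln_le; [lra|apply INR_ge1; auto]).
    unfold Rdiv. apply Rmult_le_compat_l; auto. apply Rinv_le_contravar. apply e_pos. apply eta_anti; auto. }
  assert (HG : G (s-1)%nat <= G T).
  { unfold G. pose proof (INR_ge1 (s-1) ltac:(lia)).
    assert (0 <= ln (INR (s-1))) by (rewrite <- ln_1; apply ln_le; lra).
    assert (ln (INR (s-1)) <= ln (INR T)) by (apply ln_le; [lra | apply le_INR; lia]).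
    pose proof (e_pos T). pose proof (e_pos (s-1)).
    assert (/ e (s-1)%nat <= / e T) by (apply Rinv_le_contravar; auto; apply eta_anti; auto; lia).
    unfold Rdiv. apply Rmult_le_compat; auto. left; apply Rinv_0_lt_compat; auto. }
  assert (Ha : range_sum a r s <= 1/4 * sqrt L * sqrt (INR T)).
  { unfold a, range_sum. rewrite rsum_scal. fold (range_sum (fun t => e (t-1)%nat) r s).
    pose proof (eta_sum d T r s Hd HT Hr Hrs HsT). fold L in H2.
    assert (sqrt (INR (s-1)) <= sqrt (INR T)) by (apply sqrt_le_1_alt; apply le_INR; lia).
    pose proof (sqrt_pos (INR (r-2))). pose proof (sqrt_pos L).
    unfold e in *. nra. }
  pose proof DG_T. lra.
Qed.

Lemma r1_bound s : (1 <= s)%nat -> (s <= T)%nat ->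
  range_sum g 1 s <= 1/8 * sqrt L + sqrt (3 * ln (3 * INR d)) + 1/4 * sqrt L * sqrt (INR T) + sqrt L * sqrt (INR T).
Proof.
  intros Hs HsT.
  pose proof (INR_ge1 d Hd).
  assert (Hg1 : g 1%nat <= 1/8 * sqrt L + sqrt (3 * ln (3 * INR d))).
  { pose proof (per_step 1 ltac:(lia)). pose proof (W_le0 1).
    assert (He10 : e 1%nat = e 0%nat) by (unfold e; rewrite !eta_small by lia; auto).
    assert (HU : U 1%nat = - LD / e 0%nat).
    { unfold U. simpl (1-1)%nat. unfold P, phat. simpl (1-1)%nat. simpl fs_weights. rewrite Qf_unif. unfold LD. field.
      pose proof (e_pos 0); lra. apply q_sum. auto. }
    unfold Dn in H0. simpl (1-1)%nat in H0. rewrite He10, HU in H0.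
    assert (Ha1 : a 1%nat <= 1/8 * sqrt L) by (unfold a; simpl (1-1)%nat; pose proof (eta0_le d T Hd HT); fold L in H2; unfold e; lra).
    set (M := ln (INR d * 3)).
    assert (HM : 0 < M) by (unfold M; rewrite <- ln_1; apply ln_increasing; lra).
    assert (HDM : LD <= M) by (unfold LD, M; apply ln_le; lra).
    assert (He0 : e 0%nat = sqrt (M / 3)) by (unfold e; rewrite eta_small by lia; auto).
    assert (HK : sqrt (3 * ln (3 * INR d)) = sqrt M * sqrt 3) by (replace (3 * ln (3 * INR d)) with (M * 3) by (unfold M; rewrite (Rmult_comm 3 (INR d)); ring); apply sqrt_mult_alt; lra).
    rewrite sqrt_div_alt in He0 by lra.
    assert (0 < sqrt M) by (apply sqrt_lt_R0; lra). assert (0 < sqrt 3) by (apply sqrt_lt_R0; lra).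
    assert (HMM : sqrt M * sqrt M = M) by (apply sqrt_sqrt; lra).
    assert (LD / e 0%nat <= sqrt (3 * ln (3 * INR d))).
    { rewrite He0, HK. apply Rle_trans with (M / (sqrt M / sqrt 3)).
      unfold Rdiv. apply Rmult_le_compat_r; auto. left; apply Rinv_0_lt_compat; apply Rdiv_lt_0_compat; lra.
      right. rewrite <- HMM at 1. field. lra. }
    replace (LD / e 0%nat - LD / e 0%nat) with 0 in H0 by ring.
    replace (- (- LD / e 0%nat)) with (LD / e 0%nat) in H0 by (field; pose proof (e_pos 0); lra). lra. }
  destruct (Nat.eq_dec s 1).
  - subst. rewrite range_sum_base. pose proof L_pos. pose proof (sqrt_pos L). pose proof (sqrt_pos (INR T)). nra.
  - rewrite range_sum_first by lia. pose proof (core 2 s ltac:(lia) ltac:(lia) HsT). lra.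
Qed.

End Main.

Lemma sqrt2_ge : 7/5 <= sqrt 2.
Proof. replace (7/5) with (sqrt (7/5 * (7/5))) by (apply sqrt_square; lra). apply sqrt_le_1_alt. lra. Qed.



Theorem mainTheorem14 :
  forall (d : nat) (T : nat) (l : nat -> nat -> R),
    (1 <= d)%nat -> (3 <= T)%nat ->
    (forall t j, (1 <= t <= T)%nat -> (j < d)%nat -> 0 <= l t j <= 1) ->
    forall (r s : nat), (1 <= r)%nat -> (r <= s)%nat -> (s <= T)%nat ->
    forall q : nat -> R, in_simplex d q ->
      range_sum (fun t => dot d (phat d (eta_thm d) alpha_thm l t) (l t)) r s
      - range_sum (fun t => dot d q (l t)) r s
      <= sqrt (2 * INR T * ln (INR d * INR T)) + sqrt (3 * ln (3 * INR d)).
Proof.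
  intros d T l Hd HT Hl r s Hr Hrs HsT q Hq.
  rewrite range_sum_minus.
  pose proof (L_pos d T Hd HT) as HL.
  set (L := ln (INR d * INR T)) in *.
  pose proof (INR_ge3 T HT).
  assert (E : sqrt (2 * INR T * L) = sqrt 2 * sqrt (INR T) * sqrt L).
  { rewrite sqrt_mult_alt by lra. rewrite sqrt_mult_alt by lra. ring. }
  rewrite E. pose proof sqrt2_ge.
  assert (HsTL : 7/5 * (sqrt (INR T) * sqrt L) <= sqrt 2 * sqrt (INR T) * sqrt L).
  { rewrite Rmult_assoc. apply Rmult_le_compat_r; auto. apply Rmult_le_pos; apply sqrt_pos. }
  assert (1 <= sqrt (INR T)) by (rewrite <- sqrt_1; apply sqrt_le_1_alt; lra).
  assert (0 < sqrt L) by (apply sqrt_lt_R0; lra).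
  pose proof (sqrt_pos (3 * ln (3 * INR d))).
  destruct (Nat.eq_dec r 1).
  - subst. pose proof (r1_bound d T l q Hd HT Hl Hq s Hrs HsT) as Hb. fold L in Hb.
    assert (1/8 * sqrt L <= 3/20 * sqrt L * sqrt (INR T)) by nra. lra.
  - pose proof (core d T l q Hd HT Hl Hq r s ltac:(lia) Hrs HsT) as Hb. fold L in Hb. assert (0 <= sqrt L * sqrt (INR T)) by nra. lra.
Qed.
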